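(* Let $R$ be a 2-primal ring (for instance a reduced, commutative, left duo, symmetric, reversible, IFP, PSI or semi-symmetric ring) and $M$ a projective left $R$-module. Then $\mathcal N_s(M)=\langle E_M(0)\rangle=\beta_{co}(M)=\beta(M)$. In particular the zero submodule of $M$ satisfies both the complete radical formula and the radical formula.
   Context: Rings are associative with identity; modules are unital left modules. A ring is 2-primal if its set of nilpotent elements equals its prime radical; the listed ring classes are all contained in the class of 2-primal rings. A submodule $P$ of $M$ is prime if $RM\not\subseteq P$ and for every ideal $A$ and submodule $K$ with $AK\subseteq P$, $K\subseteq P$ or $AM\subseteq P$; completely prime if $RM\not\subseteq P$ and $rm\in P$ implies $m\in P$ or $rM\subseteq P$. $\beta(M)$ (resp. $\beta_{co}(M)$) is the intersection of all prime (resp. completely prime) submodules ($=M$ if none). $E_M(0)=\{rm: r^km=0\text{ for some }k\in\mathbb N\}$, $\langle E_M(0)\rangle$ the submodule generated. A submodule $N$ satisfies the radical formula (resp. complete radical formula) if the submodule generated by $E_M(N)=\{rm: r^km\in N\text{ for some }k\}$ equals the intersection of all prime (resp. completely prime) submodules containing $N$. $\mathcal N_s(M)$ is the set of strongly nilpotent elements: $m=\sum_{i=1}^r a_im_i$ such that for each $i$ and every sequence $a_{i1}=a_i$, $a_{i,n+1}\in a_{in}Ra_{in}$, some $a_{ik}Rm_i=0$. *)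

(* Defs.v *)
From HB Require Import structures.
From mathcomp Require Import all_boot all_order all_algebra.
Set Implicit Arguments. Unset Strict Implicit. Unset Printing Implicit Defensive.
Import GRing.Theory.
Local Open Scope ring_scope.

Section RingDefs.
Variable R : nzRingType.

Definition is_ideal (A : R -> Prop) : Prop :=
  [/\ A 0, (forall x y, A x -> A y -> A (x + y)),
      (forall r x, A x -> A (r * x)) & (forall r x, A x -> A (x * r))].

Definition gen_ideal (S : R -> Prop) : R -> Prop :=
  fun x => forall I, is_ideal I -> (forall y, S y -> I y) -> I x.

Definition ideal_prod (A B : R -> Prop) : R -> Prop :=
  gen_ideal (fun x => exists a b, [/\ A a, B b & x = a * b]).

Definition prime_ideal (P : R -> Prop) : Prop :=
  [/\ is_ideal P, ~ (forall x, P x) &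
      forall A B, is_ideal A -> is_ideal B ->
        (forall x, ideal_prod A B x -> P x) ->
        (forall x, A x -> P x) \/ (forall x, B x -> P x)].

(* prime radical: intersection of all prime ideals (= R if there are none) *)
Definition prime_radical : R -> Prop :=
  fun x => forall P, prime_ideal P -> P x.

Definition nilpotent_el (x : R) : Prop := exists n : nat, x ^+ n = 0.

Definition two_primal : Prop :=
  forall x, nilpotent_el x <-> prime_radical x.

Section ModDefs.
Variable M : lmodType R.

Definition is_submodule (N : M -> Prop) : Prop :=
  [/\ N 0, (forall x y, N x -> N y -> N (x + y)) &
      (forall (r : R) x, N x -> N (r *: x))].

Definition gen_sub (S : M -> Prop) : M -> Prop :=
  fun m => forall N, is_submodule N -> (forall y, S y -> N y) -> N m.

Definition sub_prod (A : R -> Prop) (K : M -> Prop) : M -> Prop :=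
  gen_sub (fun m => exists a k, [/\ A a, K k & m = a *: k]).

Definition fullM : M -> Prop := fun _ => True.
Definition fullR : R -> Prop := fun _ => True.

Definition subset_of (X Y : M -> Prop) : Prop := forall m, X m -> Y m.
Definition same_set (X Y : M -> Prop) : Prop := forall m, X m <-> Y m.

Definition prime_sub (P : M -> Prop) : Prop :=
  [/\ is_submodule P, ~ subset_of (sub_prod fullR fullM) P &
      forall A K, is_ideal A -> is_submodule K ->
        subset_of (sub_prod A K) P ->
        subset_of K P \/ subset_of (sub_prod A fullM) P].

(* rM = { r m : m in M } *)
Definition completely_prime_sub (P : M -> Prop) : Prop :=
  [/\ is_submodule P, ~ subset_of (sub_prod fullR fullM) P &
      forall (r : R) (m : M), P (r *: m) ->
        P m \/ (forall m', P (r *: m'))].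

Definition beta : M -> Prop := fun m => forall P, prime_sub P -> P m.
Definition beta_co : M -> Prop :=
  fun m => forall P, completely_prime_sub P -> P m.

Definition E_M (N : M -> Prop) : M -> Prop :=
  fun x => exists (r : R) (m : M) (k : nat), x = r *: m /\ N (r ^+ k *: m).

Definition zero_sub : M -> Prop := fun m => m = 0.

Definition radical_formula (N : M -> Prop) : Prop :=
  same_set (gen_sub (E_M N))
           (fun m => forall P, prime_sub P -> subset_of N P -> P m).

Definition complete_radical_formula (N : M -> Prop) : Prop :=
  same_set (gen_sub (E_M N))
           (fun m => forall P, completely_prime_sub P -> subset_of N P -> P m).

Definition strongly_nilpotent_pair (a : R) (m : M) : Prop :=
  forall s : nat -> R, s 0%N = a ->
    (forall n, exists r, s n.+1 = s n * r * s n) ->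
    exists k, forall r, (s k * r) *: m = 0.

Definition strongly_nilpotent_elts : M -> Prop :=
  fun m => exists l : seq (R * M),
    m = \sum_(p <- l) p.1 *: p.2 /\
    (forall p, p \in l -> strongly_nilpotent_pair p.1 p.2).

End ModDefs.

Definition projective (M : lmodType R) : Prop :=
  forall (N P : lmodType R) (g : {linear N -> P}) (f : {linear M -> P}),
    (forall y : P, exists x : N, g x = y) ->
    exists h : {linear M -> N}, forall m, g (h m) = f m.

End RingDefs.

Arguments strongly_nilpotent_elts {R} M _.
Arguments beta {R} M _.
Arguments beta_co {R} M _.
Arguments zero_sub {R} M _.
Arguments two_primal R : clear implicits.

(* Main.v *)
From HB Require Import structures.
From mathcomp Require Import all_boot all_order all_algebra.
From mathcomp Require Import boolp classical_sets.
From mathcomp Require Import finmap monalg.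
Require Import Defs.
Set Implicit Arguments. Unset Strict Implicit. Unset Printing Implicit Defensive.
Import GRing.Theory.
Local Open Scope ring_scope.

Section Zorn.
Variable T : Type.
Lemma zorn_good (G : (T -> Prop) -> Prop) (I0 : T -> Prop) :
  G I0 ->
  (forall F : (T -> Prop) -> Prop, (forall X, F X -> G X) ->
     (forall X Y, F X -> F Y -> (forall x, X x -> Y x) \/ (forall x, Y x -> X x)) ->
     (exists X, F X) -> G (fun x => exists X, F X /\ X x)) ->
  exists A, G A /\ forall B, G B -> (forall x, A x -> B x) -> forall x, B x -> A x.
Proof.
move=> GI0 Gch.
pose P := fun X : set T => (forall x, ~ X x) \/ G X.
have Hz : forall F : set (set T), (F `<=` P)%classic -> total_on F subset -> P (\bigcup_(X in F) X)%classic.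
  move=> F FP Ftot.
  case: (pselect (exists X, F X /\ exists x, X x)) => [[X0 [FX0 [x0 X0x0]]]|Hn].
    right.
    have -> : (\bigcup_(X in F) X)%classic = (fun x => exists Z, (F Z /\ exists y, Z y) /\ Z x).
      apply/funext => x; apply/propext; split.
        by case=> Z FZ Zx; exists Z; split => //; split => //; exists x.
      by case=> Z [[FZ _] Zx]; exists Z.
    apply: Gch.
    - move=> X2 [FX [y Xy]]; by case: (FP X2 FX) => // /(_ y Xy).
    - move=> X1 Y1 [FX _] [FY _].
      have [] := Ftot X1 Y1 FX FY => H; [left|right] => x; exact: H.
    - by exists X0; split => //; exists x0.
  left => x [X FX Xx]; apply: Hn; exists X; split; [done | by exists x].
have [A [PA Amax]] := Zorn_bigcup Hz.
have GA : G A.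
  case: PA => // A0.
  case: (pselect (exists x, I0 x)) => [[x0 I0x0]|HI0].
    exfalso; apply: (Amax I0); last by right.
    split; first by move=> x /A0.
    by move=> /(_ x0 I0x0) /A0.
  have -> : A = I0 => //.
  apply/funext => x; apply/propext; split => [/A0 //|Ix].
  by exfalso; apply: HI0; exists x.
exists A; split => // B GB AB x Bx.
apply: contrapT => nAx; apply: (Amax B); last by right.
by split => // /(_ x Bx).
Qed.
End Zorn.

Section RingPart.
Variable R : nzRingType.
Implicit Types (I Q A B : R -> Prop) (a b x y r : R).

Lemma gen_ideal_is_ideal (S : R -> Prop) : is_ideal (gen_ideal S).
Proof.
split.
- by move=> I [].
- by move=> x y Hx Hy I HI HS; case: (HI) => _ Hadd _ _; apply: Hadd; [apply: Hx|apply: Hy].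
- by move=> r x Hx I HI HS; case: (HI) => _ _ Hl _; apply: Hl; apply: Hx.
- by move=> r x Hx I HI HS; case: (HI) => _ _ _ Hr; apply: Hr; apply: Hx.
Qed.

Lemma gen_ideal_incl (S : R -> Prop) x : S x -> gen_ideal S x.
Proof. by move=> Sx I _ HS; apply: HS. Qed.

Lemma gen_ideal_min (S I : R -> Prop) : is_ideal I -> (forall y, S y -> I y) ->
  forall x, gen_ideal S x -> I x.
Proof. by move=> HI HS x Hx; apply: Hx. Qed.

Lemma ideal_prod_gen A B a b : A a -> B b -> ideal_prod A B (a * b).
Proof. by move=> Aa Bb; apply: gen_ideal_incl; exists a, b. Qed.

Lemma prime_radical_ideal : is_ideal (prime_radical (R:=R)).
Proof.
split.
- by move=> P [[]].
- by move=> x y Hx Hy P HP; case: (HP) => [[_ Hadd _ _] _ _]; apply: Hadd; [apply: Hx|apply: Hy].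
- by move=> r x Hx P HP; case: (HP) => [[_ _ Hl _] _ _]; apply: Hl; apply: Hx.
- by move=> r x Hx P HP; case: (HP) => [[_ _ _ Hr] _ _]; apply: Hr; apply: Hx.
Qed.

Lemma nil_ideal : two_primal R -> is_ideal (@nilpotent_el R).
Proof.
move=> tp; have [H0 Hadd Hl Hr] := prime_radical_ideal.
split.
- by apply/tp.
- by move=> x y /tp Hx /tp Hy; apply/tp; apply: Hadd.
- by move=> r x /tp Hx; apply/tp; apply: Hl.
- by move=> r x /tp Hx; apply/tp; apply: Hr.
Qed.

Lemma ideal_mull I r x : is_ideal I -> I x -> I (r * x).
Proof. by case=> _ _ Hl _; apply: Hl. Qed.
Lemma ideal_mulr I r x : is_ideal I -> I x -> I (x * r).
Proof. by case=> _ _ _ Hr; apply: Hr. Qed.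
Lemma ideal_add I x y : is_ideal I -> I x -> I y -> I (x + y).
Proof. by case=> _ Hadd _ _; apply: Hadd. Qed.
Lemma ideal0 I : is_ideal I -> I 0.
Proof. by case. Qed.

Lemma chain_ideal (F : (R -> Prop) -> Prop) :
  (forall X, F X -> is_ideal X) ->
  (forall X Y, F X -> F Y -> (forall x, X x -> Y x) \/ (forall x, Y x -> X x)) ->
  (exists X, F X) -> is_ideal (fun x => exists X, F X /\ X x).
Proof.
move=> Fid Ftot [X0 FX0]; split.
- by exists X0; split => //; apply: ideal0; apply: Fid.
- move=> x y [X [FX Xx]] [Y [FY Yy]].
  case: (Ftot X Y FX FY) => H.
    by exists Y; split => //; apply: ideal_add; [apply: Fid| apply: H|].
  by exists X; split => //; apply: ideal_add; [apply: Fid| |apply: H].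
- by move=> r x [X [FX Xx]]; exists X; split => //; apply: ideal_mull => //; apply: Fid.
- by move=> r x [X [FX Xx]]; exists X; split => //; apply: ideal_mulr => //; apply: Fid.
Qed.

Definition recseq (s : nat -> R) := forall n, exists r, s n.+1 = s n * r * s n.

Lemma recseq_ideal s I : recseq s -> is_ideal I -> forall n k, I (s n) -> I (s (n + k)%N).
Proof.
move=> rs HI n k; elim: k => [|k IH]; first by rewrite addn0.
move=> /IH Hk; rewrite addnS; case: (rs (n + k)%N) => r ->.
by apply: ideal_mulr => //; apply: ideal_mulr.
Qed.

Lemma seq_prime s : recseq s -> (forall n, s n <> 0) ->
  exists Q, prime_ideal Q /\ ~ Q (s 0%N).
Proof.
move=> rs sn0.
pose G := fun I => is_ideal I /\ forall n, ~ I (s n).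
have [Q [[HQ Qs] Qmax]] : exists A, G A /\ (forall B, G B -> (forall x, A x -> B x) -> forall x, B x -> A x).
  apply: (@zorn_good R G (fun x => x = 0)).
- split; last by move=> n /sn0.
  split => //.
  + by move=> x y -> ->; rewrite addr0.
  + by move=> r x ->; rewrite mulr0.
  + by move=> r x ->; rewrite mul0r.
- move=> F FG Ftot Fne; split.
    by apply: chain_ideal => // X /FG [].
  by move=> n [X [FX Xs]]; case: (FG X FX) => _ /(_ n).
exists Q; split => //; split => //.
  by move=> /(_ (s 0%N)); apply: Qs.
move=> A B HA HB HAB.
pose plus := fun (X : R -> Prop) => fun x => exists q a, [/\ Q q, X a & x = q + a].
have plus_ideal X : is_ideal X -> is_ideal (plus X).
  move=> HX; split.
  - by exists 0, 0; rewrite addr0; split => //; apply: ideal0.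
  - move=> x y [q1 [a1 [Hq1 Ha1 ->]]] [q2 [a2 [Hq2 Ha2 ->]]].
    exists (q1 + q2), (a1 + a2); split; [exact: ideal_add|exact: ideal_add|].
    by rewrite addrACA.
  - move=> r x [q1 [a1 [Hq1 Ha1 ->]]]; exists (r * q1), (r * a1).
    by split; [exact: ideal_mull|exact: ideal_mull|rewrite mulrDr].
  - move=> r x [q1 [a1 [Hq1 Ha1 ->]]]; exists (q1 * r), (a1 * r).
    by split; [exact: ideal_mulr|exact: ideal_mulr|rewrite mulrDl].
have meet X a : is_ideal X -> X a -> ~ Q a -> exists n, plus X (s n).
  move=> HX Xa nQa; apply: contrapT => Hn.
  have GX : G (plus X).
    split; first exact: plus_ideal.
    by move=> n Pn; apply: Hn; exists n.
  have : forall x, Q x -> plus X x.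
    by move=> x Qx; exists x, 0; rewrite addr0; split => //; apply: ideal0.
  move=> /(Qmax _ GX) /(_ a) H; apply: nQa; apply: H.
  by exists 0, a; rewrite add0r; split => //; apply: ideal0.
case: (pselect (forall x, A x -> Q x)) => [|nA]; first by left.
case: (pselect (forall x, B x -> Q x)) => [|nB]; first by right.
exfalso.
have [a [Aa nQa]] : exists a, A a /\ ~ Q a.
  by apply: contrapT => H; apply: nA => x Ax; apply: contrapT => nQ; apply: H; exists x.
have [b [Bb nQb]] : exists b, B b /\ ~ Q b.
  by apply: contrapT => H; apply: nB => x Bx; apply: contrapT => nQ; apply: H; exists x.
have [i Hi] := meet A a HA Aa nQa.
have [j Hj] := meet B b HB Bb nQb.
have Hi' := @recseq_ideal s _ rs (plus_ideal A HA) i j Hi.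
have Hj' := @recseq_ideal s _ rs (plus_ideal B HB) j i Hj.
rewrite addnC in Hj'.
apply: (Qs (i + j).+1).
case: (rs (i + j)%N) => r ->.
move: Hi' Hj' => [q1 [a1 [Hq1 Ha1 E1]]] [q2 [a2 [Hq2 Ha2 E2]]].
rewrite {1}E1 {}E2 mulrDl mulrDl [a1 * r * _]mulrDr.
apply: (ideal_add HQ).
  by apply: (ideal_mulr _ HQ); apply: (ideal_mulr _ HQ).
apply: (ideal_add HQ).
  exact: (ideal_mull _ HQ).
rewrite -mulrA; apply: HAB; apply: ideal_prod_gen => //.
exact: (ideal_mull _ HB).
Qed.

Lemma nil_seq0 : two_primal R -> forall a, nilpotent_el a ->
  forall s, s 0%N = a -> recseq s -> exists k, s k = 0.
Proof.
move=> tp a Na s s0 rs; apply: contrapT => H.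
have sn0 : forall n, s n <> 0 by move=> n sn; apply: H; exists n.
have [Q [PQ nQ]] := seq_prime rs sn0.
by apply: nQ; rewrite s0; apply: (proj1 (tp a) Na).
Qed.

End RingPart.

Section CPRing.
Variable R : nzRingType.
Implicit Types (I Q A B : R -> Prop) (a b x y r : R).

Definition csp I := forall y, I (y * y) -> I y.

Lemma csp_rev I a b : is_ideal I -> csp I -> I (a * b) -> I (b * a).
Proof.
move=> HI Hc Hab; apply: (Hc).
have -> : b * a * (b * a) = b * (a * b) * a by rewrite !mulrA.
by apply: (ideal_mulr _ HI); apply: (ideal_mull _ HI).
Qed.

Lemma csp_mid I a b r : is_ideal I -> csp I -> I (a * b) -> I (a * r * b).
Proof.
move=> HI Hc Hab; apply: (Hc).
have -> : a * r * b * (a * r * b) = a * r * (b * a) * (r * b) by rewrite !mulrA.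
apply: (ideal_mulr _ HI); apply: (ideal_mull _ HI); exact: (csp_rev HI Hc Hab).
Qed.

Lemma colon_ideal I b : is_ideal I -> csp I ->
  [/\ is_ideal (fun y => I (y * b)), csp (fun y => I (y * b)) & forall x, I x -> I (x * b)].
Proof.
move=> HI Hc; split.
- split.
  + by rewrite mul0r; apply: ideal0.
  + by move=> x y Hx Hy; rewrite mulrDl; apply: ideal_add.
  + by move=> r x Hx; rewrite -mulrA; apply: ideal_mull.
  + by move=> r x Hx; exact: csp_mid.
- move=> y Hy; apply: (Hc).
  have H1 : I (y * (y * b)) by rewrite mulrA.
  have H2 := csp_rev HI Hc H1.
  have -> : y * b * (y * b) = (y * b * y) * b by rewrite !mulrA.
  by apply: ideal_mulr.
- by move=> x Hx; apply: ideal_mulr.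
Qed.

Lemma cp_avoid : two_primal R -> forall x, ~ nilpotent_el x ->
  exists Q, [/\ is_ideal Q, (forall a b, Q (a * b) -> Q a \/ Q b) & ~ Q x].
Proof.
move=> tp x nx.
pose G := fun I => [/\ is_ideal I, csp I & forall n, ~ I (x ^+ n)].
have [Q [[HQ Qc Qx] Qmax]] : exists A, G A /\ (forall B, G B -> (forall x, A x -> B x) -> forall x, B x -> A x).
  apply: (@zorn_good R G (@nilpotent_el R)).
  - split; first exact: nil_ideal.
    + by move=> y [n Hn]; exists (2 * n)%N; rewrite exprM expr2.
    + by move=> n [k Hk]; apply: nx; exists (n * k)%N; rewrite exprM.
  - move=> F FG Ftot Fne; split.
    + by apply: chain_ideal => // X /FG [].
    + move=> y [X [FX Xy]]; exists X; split => //.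
      by case: (FG X FX) => _ Hc _; apply: Hc.
    + by move=> n [X [FX Xs]]; case: (FG X FX) => _ _ /(_ n).
exists Q; split => //; last by move=> Qx'; apply: (Qx 1%N); rewrite expr1.
move=> a b Hab; apply: contrapT => /not_orP [nQa nQb]; exfalso.
have step : forall a b, Q (a * b) -> ~ Q a -> exists n, Q (x ^+ n * b).
  move=> a' b' Hab' nQa'; apply: contrapT => Hn.
  have [Ci Cc Csup] := colon_ideal b' HQ Qc.
  have GC : G (fun y => Q (y * b')).
    by split => // n Hn'; apply: Hn; exists n.
  by apply: nQa'; apply: (Qmax _ GC Csup).
have [n Hn] := step a b Hab nQa.
have Hn' := csp_rev HQ Qc Hn.
have [m Hm] := step b (x ^+ n) Hn' nQb.
by apply: (Qx (m + n)%N); rewrite exprD.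
Qed.

End CPRing.

Section ModPart.
Variable R : nzRingType.
Variable M : lmodType R.
Implicit Types (N P K : M -> Prop) (A : R -> Prop).

Lemma sub0 N : is_submodule N -> N 0. Proof. by case. Qed.
Lemma subD N x y : is_submodule N -> N x -> N y -> N (x + y).
Proof. by case=> _ H _; apply: H. Qed.
Lemma subZ N r x : is_submodule N -> N x -> N (r *: x).
Proof. by case=> _ _ H; apply: H. Qed.

Lemma sub_sum N (I : eqType) (l : seq I) (F : I -> M) :
  is_submodule N -> (forall i, i \in l -> N (F i)) -> N (\sum_(i <- l) F i).
Proof.
move=> HN; elim: l => [|i l IH] H; first by rewrite big_nil; apply: sub0.
rewrite big_cons; apply: subD => //; first by apply: H; rewrite inE eqxx.
by apply: IH => j Hj; apply: H; rewrite inE Hj orbT.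
Qed.

Lemma gen_sub_is_sub (S : M -> Prop) : is_submodule (gen_sub S).
Proof.
split.
- by move=> N HN _; apply: sub0.
- by move=> x y Hx Hy N HN HS; apply: subD => //; [apply: Hx|apply: Hy].
- by move=> r x Hx N HN HS; apply: subZ => //; apply: Hx.
Qed.

Lemma gen_sub_incl (S : M -> Prop) m : S m -> gen_sub S m.
Proof. by move=> Sm N _ HS; apply: HS. Qed.

Lemma inter_sub (Pr : (M -> Prop) -> Prop) : (forall P, Pr P -> is_submodule P) ->
  is_submodule (fun m => forall P, Pr P -> P m).
Proof.
move=> H; split.
- by move=> P /H; apply: sub0.
- by move=> x y Hx Hy P HP; apply: subD; [apply: H|apply: Hx|apply: Hy].
- by move=> r x Hx P HP; apply: subZ; [apply: H|apply: Hx].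
Qed.

Lemma beta_sub : is_submodule (beta M).
Proof. by apply: inter_sub => P []. Qed.
Lemma beta_co_sub : is_submodule (beta_co M).
Proof. by apply: inter_sub => P []. Qed.

Lemma sub_prod_gen A K a k : A a -> K k -> sub_prod A K (a *: k).
Proof. by move=> Aa Kk; apply: gen_sub_incl; exists a, k. Qed.

Lemma cp_prime P : completely_prime_sub P -> prime_sub P.
Proof.
case=> HP HnP Hcp; split => // A K HA HK HAK.
case: (pselect (subset_of K P)) => [|nKP]; first by left.
right.
have [k [Kk nPk]] : exists k, K k /\ ~ P k.
  by apply: contrapT => H; apply: nKP => m Km; apply: contrapT => nPm; apply: H; exists m.
move=> m Hm; apply: Hm => // y [a [m' [Aa _ ->]]].
have : P (a *: k) by apply: HAK; apply: sub_prod_gen.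
by case/Hcp.
Qed.

Lemma beta_beta_co m : beta M m -> beta_co M m.
Proof. by move=> Hm P /cp_prime; apply: Hm. Qed.

Lemma E_beta_co m : gen_sub (E_M (zero_sub M)) m -> beta_co M m.
Proof.
move=> Hm; apply: Hm; first exact: beta_co_sub.
move=> y [r [m' [k [-> Hk]]]] P HP.
case: (HP) => HPs _ Hcp.
have Hk' : r ^+ k *: m' = 0 := Hk.
suff H : forall k m'', P (r ^+ k *: m'') -> P (r *: m'') by apply: (H k); rewrite Hk'; apply: sub0.
elim=> [|n IH] m''.
  by rewrite expr0 scale1r => H; apply: subZ.
rewrite exprS -scalerA => /Hcp [/IH //|]; apply.
Qed.

Lemma sn_pair_prime a m P : prime_sub P -> strongly_nilpotent_pair a m -> P (a *: m).
Proof.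
move=> HP Hsn; apply: contrapT => nPam.
case: (HP) => HPs _ Hpr.
pose Inv := fun b => exists r, ~ P ((b * r) *: m).
have step : forall b, Inv b -> exists y, Inv (b * y * b).
  move=> b [r0 nP0]; apply: contrapT => Hn.
  have Hall : forall y z, P ((b * y * b * z) *: m).
    move=> y z; apply: contrapT => H; apply: Hn; exists y; exists z; exact: H.
  pose A := gen_ideal (fun x => x = b).
  pose K := gen_sub (fun n => exists z, n = (b * z) *: m).
  have HA : is_ideal A := gen_ideal_is_ideal _.
  pose AA := fun a' => forall y z, P ((a' * y * b * z) *: m).
  have AAid : is_ideal AA.
    split.
    - by move=> y z; rewrite !mul0r scale0r; apply: sub0.
    - by move=> x1 x2 H1 H2 y z; rewrite !mulrDl scalerDl; apply: subD.
    - move=> r x1 H1 y z.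
      have -> : r * x1 * y * b * z = r * (x1 * y * b * z) by rewrite !mulrA.
      by rewrite -scalerA; apply: subZ.
    - move=> r x1 H1 y z.
      have -> : x1 * r * y * b * z = x1 * (r * y) * b * z by rewrite !mulrA.
      exact: H1.
  have AsubAA : forall x, A x -> AA x.
    apply: gen_ideal_min => // y ->; exact: Hall.
  pose KK := fun k => forall a', A a' -> P (a' *: k).
  have KKsub : is_submodule KK.
    split.
    - by move=> a' _; rewrite scaler0; apply: sub0.
    - by move=> x y Hx Hy a' Ha'; rewrite scalerDr; apply: (subD HPs); [apply: Hx|apply: Hy].
    - move=> r x Hx a' Ha'; rewrite scalerA; apply: Hx.
      exact: (ideal_mulr _ HA Ha').
  have KsubKK : forall k, K k -> KK k.
    move=> k Hk; apply: Hk => // n [z ->] a' Ha'.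
    have := AsubAA a' Ha' 1 z; rewrite mulr1 scalerA.
    by have -> : a' * (b * z) = a' * b * z by rewrite mulrA.
  have HK : is_submodule K := gen_sub_is_sub _.
  have HAK : subset_of (sub_prod A K) P.
    move=> x Hx; apply: Hx => // y [a' [k [Aa' Kk ->]]].
    exact: KsubKK.
  case: (Hpr A K HA HK HAK) => H.
    apply: nP0; apply: H; apply: gen_sub_incl; by exists r0.
  apply: nP0; rewrite -scalerA; apply: H; apply: sub_prod_gen => //.
  exact: gen_ideal_incl.
have step' : forall b, exists y, Inv b -> Inv (b * y * b).
  move=> b; case: (pselect (Inv b)) => [/step [y Hy]|nI].
    by exists y.
  by exists 0 => /nI.
have [f Hf] := choice step'.
pose s := fun n => iter n (fun b => b * f b * b) a.
have Hs : forall n, Inv (s n).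
  elim=> [|n IH]; first by exists 1; rewrite mulr1.
  exact: Hf.
have [k Hk] := Hsn s erefl (fun n => ex_intro _ (f (s n)) erefl).
have [r Hr] := Hs k.
by apply: Hr; rewrite Hk; apply: (sub0 HPs).
Qed.

Definition nilsum : M -> Prop := fun m => exists l : seq (R * M),
  m = \sum_(p <- l) p.1 *: p.2 /\ (forall p, p \in l -> nilpotent_el p.1).

Lemma Ns_beta m : strongly_nilpotent_elts M m -> beta M m.
Proof.
move=> [l [-> Hl]] P HP.
apply: sub_sum; first by case: HP.
by move=> p /Hl; apply: sn_pair_prime.
Qed.

Lemma nilsum_E m : nilsum m -> gen_sub (E_M (zero_sub M)) m.
Proof.
move=> [l [-> Hl]]; apply: sub_sum; first exact: gen_sub_is_sub.
move=> p /Hl [n Hn]; apply: gen_sub_incl.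
by exists p.1, p.2, n; split => //; rewrite /zero_sub Hn scale0r.
Qed.

Lemma nilsum_Ns : two_primal R -> forall m, nilsum m -> strongly_nilpotent_elts M m.
Proof.
move=> tp m [l [-> Hl]]; exists l; split => // p /Hl Hn s s0 rs.
have [k Hk] := nil_seq0 tp Hn s0 rs.
by exists k => r; rewrite Hk mul0r scale0r.
Qed.

End ModPart.

Section Free.
Variable R : nzRingType.
Variable M : lmodType R.
Local Notation F := {malg R[M]}.

Definition gmap (x : F) : M := \sum_(k <- msupp x) x@_k *: k.

Lemma gmapEw (x : F) (D : {fset M}) : (msupp x `<=` D)%fset ->
  gmap x = \sum_(k <- D) x@_k *: k.
Proof.
move=> sub; rewrite /gmap; apply: big_fset_incl => // k _.
by move=> /mcoeff_outdom ->; rewrite scale0r.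
Qed.

Lemma gmap_linear : linear gmap.
Proof.
move=> c x y.
have Hs : (msupp (c *: x + y) `<=` msupp x `|` msupp y)%fset.
  apply: fsubset_trans (msuppD_le _ _) _.
  by apply: fsetSU; apply: msuppZ_le.
rewrite (gmapEw Hs) (gmapEw (fsubsetUl (msupp x) (msupp y))) (gmapEw (fsubsetUr (msupp x) (msupp y))).
rewrite scaler_sumr -big_split /=; apply: eq_bigr => k _.
by rewrite mcoeffD mcoeffZ scalerDl scalerA.
Qed.

HB.instance Definition _ := GRing.isLinear.Build R F M *:%R gmap gmap_linear.

Lemma gmapU (m : M) : gmap << 1 *g m >> = m.
Proof.
by rewrite /gmap msuppU oner_eq0 big_seq_fset1 mcoeffUU scale1r.
Qed.

End Free.

Lemma beta_co_nilsum (R : nzRingType) (M : lmodType R) :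
  two_primal R -> projective M -> forall m, beta_co M m -> nilsum m.
Proof.
move=> tp pr m0 Hm0.
have surj : forall y : M, exists x : {malg R[M]}, gmap x = y.
  by move=> y; exists << 1 *g y >>; apply: gmapU.
have [h Hh] := pr _ _ (gmap (M:=M) : {linear _ -> M}) (idfun : {linear M -> M}) surj.
have allnil : forall k, nilpotent_el ((h m0)@_k).
  move=> k; apply: contrapT => nk.
  have [Q [HQ Qcp nQ]] := cp_avoid tp nk.
  pose PQ := fun m => forall k', Q ((h m)@_k').
  have PQsub : is_submodule PQ.
    split.
    - by move=> k'; rewrite linear0 mcoeff0; apply: ideal0.
    - by move=> x y Hx Hy k'; rewrite linearD mcoeffD; apply: ideal_add.
    - by move=> r x Hx k'; rewrite linearZ mcoeffZ; apply: ideal_mull.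
  have : completely_prime_sub PQ.
    split => //.
    - move=> Hsub; apply: nQ.
      have : PQ (1 *: m0) by apply: Hsub; apply: sub_prod_gen.
      by rewrite scale1r; apply.
    - move=> r m Hrm; case: (pselect (PQ m)) => [|nPm]; first by left.
      right.
      have [k' nk'] : exists k', ~ Q ((h m)@_k').
        by apply: contrapT => H; apply: nPm => k'; apply: contrapT => H'; apply: H; exists k'.
      have := Hrm k'; rewrite linearZ mcoeffZ => /Qcp [Qr|//].
      by move=> m' k''; rewrite linearZ mcoeffZ; apply: ideal_mulr.
  by move=> /Hm0 /(_ k).
exists [seq ((h m0)@_k, k) | k <- msupp (h m0)]; split.
  rewrite big_map; transitivity (gmap (h m0)); first by rewrite Hh.
  by [].
by move=> p /mapP [k _ ->]; apply: allnil.
Qed.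

Theorem corollary4p11 (R : nzRingType) (M : lmodType R) :
  two_primal R -> projective M ->
  [/\ same_set (strongly_nilpotent_elts M) (gen_sub (E_M (zero_sub M))),
      same_set (gen_sub (E_M (zero_sub M))) (beta_co M),
      same_set (beta_co M) (beta M),
      complete_radical_formula (zero_sub M) &
      radical_formula (zero_sub M)].
Proof.
move=> tp pr.
have cX := beta_co_nilsum tp pr.
have XE := @nilsum_E R M.
have XN := nilsum_Ns tp (M:=M).
have NB := @Ns_beta R M.
have BC := @beta_beta_co R M.
have EC := @E_beta_co R M.
have coE : forall m, (forall P, completely_prime_sub P -> subset_of (zero_sub M) P -> P m) <-> beta_co M m.
  move=> m; split => H P HP; first by apply: H => // x ->; case: HP => [[]].
  by move=> _; apply: H.
have bE : forall m, (forall P, prime_sub P -> subset_of (zero_sub M) P -> P m) <-> beta M m.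
  move=> m; split => H P HP; first by apply: H => // x ->; case: HP => [[]].
  by move=> _; apply: H.
split.
- by move=> m; split => H; [apply: XE; apply: cX; apply: BC; apply: NB | apply: XN; apply: cX; apply: EC].
- by move=> m; split => H; [apply: EC | apply: XE; apply: cX].
- by move=> m; split => H; [apply: NB; apply: XN; apply: cX | apply: BC].
- by move=> m; rewrite coE; split => H; [apply: EC | apply: XE; apply: cX].
- by move=> m; rewrite bE; split => H; [apply: NB; apply: XN; apply: cX; apply: EC | apply: XE; apply: cX; apply: BC].
Qed.
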